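(* Let $A$ be an invertible $n$-by-$n$ doubly nonnegative matrix and let $W=[w_{ij}]$ be its sign change matrix. Then: (1) if $w_{ij}=0$ or $w_{ij}=1$, the critical exponent of the $i,j$-entry of $A$ is $0$; (2) if $w_{ij}=2$, the critical exponent of the $i,j$-entry of $A$ is at most $1$.
   Context: A real matrix is doubly nonnegative if it is symmetric, positive semidefinite, and entry-wise nonnegative. Write $A=UDU^T$ with $U=[u_{ij}]$ real orthogonal and $D=\mathrm{diag}(\lambda_1,\dots,\lambda_n)$, $\lambda_1\ge\cdots\ge\lambda_n>0$; for real $t\ge 0$, $A^t=UD^tU^T$ (so $A^0=I_n$), and $(A^t)_{ij}=\sum_k u_{ik}u_{jk}\lambda_k^t$. The sign change matrix $W$ has $w_{ij}$ equal to the number of sign changes in the coefficient sequence $(u_{i1}u_{j1},\dots,u_{in}u_{jn})$, arranged in decreasing order of the corresponding eigenvalues (zeros ignored). The critical exponent of the $i,j$-entry of $A$ is the least $m\ge 0$ such that $(A^t)_{ij}\ge 0$ for all $t\ge m$. *)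

(* Defs.v *)
From HB Require Import structures.
From mathcomp Require Import all_boot all_order all_algebra.
From mathcomp Require Import all_classical all_reals all_analysis.
Set Implicit Arguments. Unset Strict Implicit. Unset Printing Implicit Defensive.
Import Order.TTheory GRing.Theory Num.Theory.
Local Open Scope ring_scope.

Section Defs.
Variable R : realType.

Definition doubly_nonnegative (n : nat) (A : 'M[R]_n) : Prop :=
  [/\ A^T = A,
      (forall x : 'cV[R]_n, 0 <= (x^T *m A *m x) 0 0)
    & (forall i j, 0 <= A i j)].

Definition sign_changes (s : seq R) : nat :=
  let s' := [seq x <- s | x != 0] in
  count (fun p : R * R => p.1 * p.2 < 0) (zip s' (behead s')).

(* Sign change matrix entry w_ij for the eigenvector matrix U
   (columns ordered by decreasing eigenvalue): number of sign changes in
   (u_{i1}u_{j1}, ..., u_{in}u_{jn}). *)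
Definition sign_change_entry (n : nat) (U : 'M[R]_n) (i j : 'I_n) : nat :=
  sign_changes [seq U i k * U j k | k <- enum 'I_n].

(* A^t = U D^t U^T, for real t >= 0, with D = diag(lam), lam > 0. *)
Definition mx_rpow (n : nat) (U : 'M[R]_n) (lam : 'I_n -> R) (t : R) : 'M[R]_n :=
  \matrix_(i, j) \sum_(k < n) U i k * U j k * (lam k `^ t).

Definition entry_nonneg_from (n : nat) (U : 'M[R]_n) (lam : 'I_n -> R)
  (i j : 'I_n) (m : R) : Prop :=
  forall t : R, m <= t -> 0 <= mx_rpow U lam t i j.

Definition is_critical_exponent (n : nat) (U : 'M[R]_n) (lam : 'I_n -> R)
  (i j : 'I_n) (m : R) : Prop :=
  [/\ 0 <= m, entry_nonneg_from U lam i j m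
    & forall m', 0 <= m' -> entry_nonneg_from U lam i j m' -> m <= m'].

End Defs.

(* Main.v *)
Require Import Defs.
From HB Require Import structures.
From mathcomp Require Import all_boot all_order all_algebra.
From mathcomp Require Import all_classical all_reals all_analysis.
From mathcomp Require Import ring lra.
Import Order.TTheory GRing.Theory Num.Theory.
Import numFieldNormedType.Exports.
Local Open Scope ring_scope.

Set Implicit Arguments. Unset Strict Implicit. Unset Printing Implicit Defensive.


Lemma amgm {R : realType} (r y : R) : 0 <= r -> r <= 1 -> 0 < y -> y `^ r <= r * y + (1 - r).
Proof.
move=> r0 r1 y0.
have := concave_ln (Itv01 r0 r1) y0 ltr01.
rewrite !convRE /= ln1 mulr0 addr0 mulr1 => h; rewrite /unstable.onem in h.
have hp : 0 < r * y + (1 - r) by nra.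
rewrite /powR gt_eqF // -[X in _ <= X]lnK; last by rewrite posrE.
by rewrite ler_expR.
Qed.

Lemma tangent {R : realType} (r x y : R) : 0 <= r -> r <= 1 -> 0 < x -> 0 < y ->
  y `^ r <= x `^ r + r * x `^ r / x * (y - x).
Proof.
move=> r0 r1 x0 y0. 
have yx : y = x * (y / x) by rewrite mulrCA divff ?gt_eqF // mulr1.
have yx0 : 0 < y / x by rewrite divr_gt0.
rewrite {1}yx powRM ?(ltW x0) ?(ltW yx0) //.
have h := @amgm _ r (y/x) r0 r1 yx0.
have xr0 : 0 < x `^ r by rewrite powR_gt0.
have e : x `^ r + r * x `^ r / x * (y - x) = x `^ r * (r * (y / x) + (1 - r)).
  by field; rewrite gt_eqF.
rewrite e; apply: ler_wpM2l => //; exact: ltW.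
Qed.

Lemma three_point {R : realType} (r p q s : R) : 0 <= r -> r <= 1 -> 0 < p -> p <= q -> q <= s ->
  (s - q) * p `^ r + (q - p) * s `^ r <= (s - p) * q `^ r.
Proof.
move=> r0 r1 p0 pq qs.
have q0 : 0 < q by apply: lt_le_trans pq.
have s0 : 0 < s by apply: lt_le_trans qs.
have h1 := @tangent _ r q p r0 r1 q0 p0.
have h2 := @tangent _ r q s r0 r1 q0 s0.
move: h1 h2; set K := r * q `^ r / q; set P := p `^ r; set Q := q `^ r; set S := s `^ r.
move=> h1 h2.
have sq : 0 <= s - q by rewrite subr_ge0.
have qp : 0 <= q - p by rewrite subr_ge0.
have h1' := ler_wpM2l sq h1.
have h2' := ler_wpM2l qp h2.
have e : (s - p) * Q = (s - q) * (Q + K * (p - q)) + (q - p) * (Q + K * (s - q)) by ring.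
rewrite e; exact: lerD.
Qed.

Lemma powle {R : realType} (r x y : R) : 0 <= r -> 0 <= x -> x <= y -> x `^ r <= y `^ r.
Proof.
move=> r0 x0 xy; apply: (ge0_ler_powR r0) => //; rewrite nnegrE //.
exact: le_trans xy.
Qed.

Lemma powlt {R : realType} (r x y : R) : 0 < r -> 0 <= x -> x < y -> x `^ r < y `^ r.
Proof.
move=> r0 x0 xy; apply: (gt0_ltr_powR r0) => //; rewrite nnegrE //.
exact: le_trans (ltW xy).
Qed.

Lemma chord {R : realType} (r A B : R) : 0 <= r -> r <= 1 -> 0 < A -> A <= B ->
  exists al ga, [/\ 0 <= al, 0 <= ga, (0 < r -> 0 < ga),
   (forall y, A <= y -> y <= B -> al + ga * y <= y `^ r) &
   (forall y, 0 < y -> (y <= A \/ B <= y) -> y `^ r <= al + ga * y)].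
Proof.
move=> r0 r1 A0; rewrite le_eqVlt => /orP[/eqP <-|AB].
  have Ar0 : 0 < A `^ r by rewrite powR_gt0.
  exists ((1 - r) * A `^ r), (r * A `^ r / A); split.
  - by rewrite mulr_ge0 ?subr_ge0 // ltW.
  - by rewrite divr_ge0 ?mulr_ge0 // ltW.
  - by move=> rp; rewrite divr_gt0 ?mulr_gt0.
  - move=> y Ay yA; have -> : y = A by apply/le_anti; rewrite Ay yA.
    have -> : (1 - r) * A `^ r + r * A `^ r / A * A = A `^ r by field; rewrite gt_eqF.
    by [].
  - move=> y y0 _; have := @tangent _ r A y r0 r1 A0 y0.
    have -> : A `^ r + r * A `^ r / A * (y - A) = (1 - r) * A `^ r + r * A `^ r / A * y.
      by field; rewrite gt_eqF.
    by [].
have D0 : 0 < B - A by rewrite subr_gt0.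
have B0 : 0 < B by apply: lt_trans AB.
have AB' : A <= B by exact: ltW.
set ga := (B `^ r - A `^ r) / (B - A).
have hga : ga * (B - A) = B `^ r - A `^ r by rewrite /ga divfK // gt_eqF.
have ga0 : 0 <= ga by rewrite divr_ge0 ?subr_ge0 ?powle // ltW.
exists (A `^ r - ga * A), ga; split => //.
- have hAB : A / B <= (A / B) `^ r.
    by apply: ger1_powR => //; rewrite divr_gt0 //= ler_pdivrMr // mul1r.
  have eA : A = B * (A / B) by rewrite mulrCA divff ?gt_eqF // mulr1.
  have hA : A `^ r = B `^ r * (A / B) `^ r.
    by rewrite {1}eA powRM // ltW // divr_gt0.
  have Br0 : 0 <= B `^ r by exact: powR_ge0.
  have h1 : B `^ r * (A / B) <= A `^ r by rewrite hA ler_wpM2l.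
  have h2 : B `^ r * (A / B) * B = B `^ r * A by field; rewrite gt_eqF.
  rewrite subr_ge0 -(ler_pM2r D0) mulrAC hga.
  have h3 : B * A `^ r >= B * (B `^ r * (A / B)) by rewrite ler_wpM2l // ltW.
  move: h3; rewrite mulrC h2 => h3.
  nra.
- by move=> rp; rewrite divr_gt0 // subr_gt0 powlt // ltW.
- move=> y Ay yB.
  have h := @three_point _ r A y B r0 r1 A0 Ay yB.
  rewrite -(ler_pM2r D0).
  have e : (A `^ r - ga * A + ga * y) * (B - A) = A `^ r * (B - A) + (y - A) * (ga * (B - A)) by ring.
  rewrite e hga.
  have e2 : A `^ r * (B - A) + (y - A) * (B `^ r - A `^ r) = (B - y) * A `^ r + (y - A) * B `^ r by ring.
  by rewrite e2 [_ * (B - A)]mulrC.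
- move=> y y0 [yA|By].
  + have h := @three_point _ r y A B r0 r1 y0 yA AB'.
    rewrite -(ler_pM2r D0).
    have e : (A `^ r - ga * A + ga * y) * (B - A) = A `^ r * (B - A) + (y - A) * (ga * (B - A)) by ring.
    rewrite e hga.
    have e2 : A `^ r * (B - A) + (y - A) * (B `^ r - A `^ r) = (B - y) * A `^ r - (A - y) * B `^ r by ring.
    rewrite e2 lerBrDr mulrC; exact: h.
  + have h := @three_point _ r A B y r0 r1 A0 AB' By.
    rewrite -(ler_pM2r D0).
    have e : (A `^ r - ga * A + ga * y) * (B - A) = A `^ r * (B - A) + (y - A) * (ga * (B - A)) by ring.
    rewrite e hga.
    have e2 : A `^ r * (B - A) + (y - A) * (B `^ r - A `^ r) = (y - A) * B `^ r - (y - B) * A `^ r by ring.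
    rewrite e2 lerBrDr mulrC addrC; exact: h.
Qed.



Lemma cont_term {R : realType} (c l : R) : 0 < l -> continuous (fun t : R => c * l `^ t).
Proof.
move=> l0.
have -> : (fun t : R => c * l `^ t) = (fun t => c * expR (t * ln l)).
  by apply: funext => t; rewrite /powR gt_eqF.
move=> x; apply: cvgM; first exact: cvg_cst.
apply: continuous_comp; last exact: continuous_expR.
by apply: cvgMl; exact: cvg_id.
Qed.

Lemma cont_sum {R : realType} (I : Type) (r : seq I) (F : I -> R -> R) :
  (forall k, continuous (F k)) -> continuous (fun t => \sum_(k <- r) F k t).
Proof.
move=> HF; elim: r => [|a r IH].
  have -> : (fun t : R => \sum_(k <- [::]) F k t) = fun=> 0.
    by apply: funext => t; rewrite big_nil.
  by move=> x; exact: cvg_cst.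
have -> : (fun t => \sum_(k <- a :: r) F k t) = (fun t => F a t + \sum_(k <- r) F k t).
  by apply: funext => t; rewrite big_cons.
by move=> x; apply: cvgD; [exact: HF | exact: IH].
Qed.

Lemma crit_exists {R : realType} (f : R -> R) : continuous f -> (forall t, 1 <= t -> 0 <= f t) ->
  exists m, [/\ 0 <= m, (forall t, m <= t -> 0 <= f t)
    & forall m', 0 <= m' -> (forall t, m' <= t -> 0 <= f t) -> m <= m'] /\ m <= 1.
Proof.
move=> fc f1.
pose S := [set m : R | 0 <= m /\ forall t, m <= t -> 0 <= f t]%classic.
have S1 : S 1 by split => //; exact: ler01.
have lbS : lbound S 0 by move=> x [].
have hinf : has_inf S by split; [exists 1 | exists 0].
have gt : forall t, inf S < t -> 0 <= f t.
  move=> t mt; have tm : 0 < t - inf S by rewrite subr_gt0.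
  have [e [_ He] et] := inf_adherent tm hinf.
  by apply: He; rewrite addrC subrK in et; exact: ltW.
exists (inf S); split; last by apply: ge_inf; [exists 0|].
split.
- by apply: lb_le_inf => //; exists 1.
- move=> t; rewrite le_eqVlt => /orP[/eqP <-|mt]; last exact: gt.
  rewrite leNgt; apply/negP => fneg.
  have := cvgr_lt (f (inf S)) (fc (inf S)) 0 fneg.
  move=> [e /= e0 He].
  have : 0 <= f (inf S + e / 2) by apply: gt; rewrite ltrDl divr_gt0.
  rewrite leNgt => /negP; apply; apply: He.
  rewrite /ball /= opprD addrA subrr sub0r normrN gtr0_norm ?divr_gt0 //.
  by rewrite ltr_pdivrMr // ltr_pMr // ltr1n.
- by move=> m' m'0 Hm'; apply: (ge_inf (ex_intro _ 0 lbS)); split.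
Qed.



Definition sgnb {R : realType} (b : bool) (x : R) : bool := if b then 0 <= x else x <= 0.

Fixpoint pat {R : realType} (b : bool) (m : nat) (s : seq R) : Prop :=
  match m with
  | 0%N => all (sgnb b) s
  | m'.+1 => exists s1 s2, [/\ s = s1 ++ s2, all (sgnb b) s1 & pat (~~ b) m' s2]
  end.

Lemma sgnb0 {R : realType} b : sgnb b (0 : R). Proof. by case: b; rewrite /sgnb lexx. Qed.

Lemma pat_cons {R : realType} b m (x : R) s : sgnb b x -> pat b m s -> pat b m (x :: s).
Proof.
case: m => [|m] /= hx; first by rewrite hx.
by move=> [s1 [s2 [-> h1 h2]]]; exists (x :: s1), s2; rewrite /= hx h1.
Qed.

Lemma pat_all {R : realType} b m (s : seq R) : all (sgnb b) s -> pat b m s.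
Proof.
elim: m b s => [|m IH] b s //= h.
by exists s, [::]; split => //; [rewrite cats0 | exact: IH].
Qed.

Lemma sc_cons0 {R : realType} s : @sign_changes R (0 :: s) = sign_changes s.
Proof. by rewrite /sign_changes /= eqxx. Qed.

Lemma sc_consN {R : realType} (x : R) s : x != 0 -> sign_changes (x :: s) =
  (match [seq y <- s | y != 0] with [::] => 0%N | y :: _ => ((x * y < 0)%R + sign_changes s)%N end).
Proof.
move=> x0; rewrite /sign_changes /= x0 /=.
by case: [seq y <- s | y != 0] => [|y fs] //=.
Qed.

Lemma sc_pat {R : realType} (s : seq R) : forall m b, (sign_changes s <= m)%N ->
  sgnb b (head 0 [seq y <- s | y != 0]) -> pat b m s.
Proof.
elim: s => [|x s IH] m b.
  by move=> _ _; apply: pat_all.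
have [->|x0] := eqVneq x 0.
  by rewrite sc_cons0 /= eqxx => hm hb; apply: pat_cons (sgnb0 b) _; apply: IH.
rewrite sc_consN // /= x0 /= => hm hb.
move: hm (IH m b).
case E: [seq y <- s | y != 0] => [|y fs] hm IHb.
  by apply: pat_cons hb _; apply: IHb; [rewrite /sign_changes E | exact: sgnb0].
have y0 : y != 0.
  have : y \in [seq y <- s | y != 0] by rewrite E mem_head.
  by rewrite mem_filter => /andP[].
case: (boolP (x * y < 0)) hm => hxy /= hm.
  case: m hm IHb => // m hm _.
  exists [:: x], s; split => //=; first by rewrite hb.
  apply: IH => //; rewrite E /=.
  by case: b hb => /=; rewrite /sgnb; nra.
have hb2 := hb; apply: pat_cons hb _; apply: IH => //; rewrite E /=.
by clear IHb; case: b hb2 => /=; rewrite /sgnb; nra.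
Qed.

Lemma pat1_nth {R : realType} b (s : seq R) : pat b 1 s -> exists p, forall k, (k < size s)%N ->
  ((k < p)%N -> sgnb b (nth 0 s k)) /\ ((p <= k)%N -> sgnb (~~ b) (nth 0 s k)).
Proof.
move=> [s1 [s2 [-> h1 /= h2]]]; exists (size s1) => k ks; rewrite nth_cat.
split=> hk.
  by rewrite hk; apply: (all_nthP 0 h1).
rewrite ltnNge hk /=; apply: (all_nthP 0 h2).
by rewrite size_cat in ks; rewrite ltn_subLR.
Qed.

Lemma pat2_nth {R : realType} b (s : seq R) : pat b 2 s -> exists p q, (p <= q)%N /\ forall k, (k < size s)%N ->
  [/\ (k < p)%N -> sgnb b (nth 0 s k), (p <= k < q)%N -> sgnb (~~ b) (nth 0 s k)
    & (q <= k)%N -> sgnb b (nth 0 s k)].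
Proof.
move=> [s1 [s2 [-> h1 [s3 [s4 [-> h3 /= h4]]]]]]; rewrite negbK in h4.
exists (size s1), (size s1 + size s3)%N; split; first exact: leq_addr.
move=> k ks; rewrite !size_cat in ks; split=> hk.
- by rewrite nth_cat hk; apply: (all_nthP 0 h1).
- case/andP: hk => hk1 hk2.
  rewrite nth_cat ltnNge hk1 /= nth_cat ltn_subLR // hk2.
  by apply: (all_nthP 0 h3); rewrite ltn_subLR.
- have hk1 : (size s1 <= k)%N by apply: leq_trans hk; exact: leq_addr.
  rewrite nth_cat ltnNge hk1 /= nth_cat ltn_subLR // ltnNge hk /=.
  by apply: (all_nthP 0 h4); rewrite !ltn_subLR // ?addnA // leq_subRL.
Qed.



Definition Mpow {R : realType} n (U : 'M[R]_n) (lam : 'I_n -> R) (N : nat) : 'M[R]_n :=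
  U *m diag_mx (\row_k lam k ^+ N) *m U^T.

Lemma Mpow_entry {R : realType} n (U : 'M[R]_n) lam N i j :
  Mpow U lam N i j = \sum_k U i k * U j k * lam k ^+ N.
Proof.
rewrite /Mpow mul_mx_diag !mxE; apply: eq_bigr => k _.
by rewrite !mxE mulrAC.
Qed.

Lemma Mpow_S {R : realType} n (U : 'M[R]_n) lam N :
  U *m U^T = 1%:M ->
  Mpow U lam N.+1 = Mpow U lam N *m (U *m diag_mx (\row_k lam k) *m U^T).
Proof.
move=> hU; have hU' : U^T *m U = 1%:M by apply: mulmx1C.
rewrite /Mpow !mulmxA -[_ *m U^T *m U]mulmxA hU' mulmx1 -[U *m _ *m diag_mx _]mulmxA.
congr (_ *m _ *m _); apply/matrixP => a b.
rewrite mul_diag_mx !mxE; case: (eqVneq a b) => [->|ab].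
  by rewrite !mulr1n exprS mulrC.
by rewrite !mulr0n mulr0.
Qed.

Lemma Mpow_ge0 {R : realType} n (A U : 'M[R]_n) lam :
  (forall i j, 0 <= A i j) -> U *m U^T = 1%:M ->
  A = U *m diag_mx (\row_k lam k) *m U^T ->
  forall N i j, 0 <= Mpow U lam N i j.
Proof.
move=> hA0 hU hA; elim=> [|N IH] i j.
  have -> : Mpow U lam 0 = 1%:M.
    rewrite -hU /Mpow.
    have -> : diag_mx (\row_k lam k ^+ 0) = 1%:M :> 'M[R]_n.
      by apply/matrixP => a b; rewrite !mxE expr0.
    by rewrite mulmx1.
  by rewrite mxE; case: (i == j); rewrite ?mulr1n ?mulr0n ?ler01.
rewrite Mpow_S // -hA mxE; apply: sumr_ge0 => l _; exact: mulr_ge0.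
Qed.

Lemma sgnb_mul_ge0 {R : realType} b (x y : R) : sgnb b x -> 0 <= y -> sgnb b (x * y).
Proof. by case: b; rewrite /sgnb => hx hy; nra. Qed.

Lemma sgnb_mul_le0 {R : realType} b (x y : R) : sgnb (~~ b) x -> y <= 0 -> sgnb b (x * y).
Proof. by case: b; rewrite /sgnb /= => hx hy; nra. Qed.

Lemma per_k {R : realType} (b : bool) (c x a bb G : R) : a <= bb ->
  ((x < a \/ bb < x) -> sgnb b c) -> (a < x < bb -> sgnb (~~ b) c) ->
  (a <= x <= bb -> G <= 0) -> (x <= a \/ bb <= x -> 0 <= G) -> sgnb b (c * G).
Proof.
move=> ab hout hin hG1 hG2.
have [xa|ax] := ltP x a.
  by apply: sgnb_mul_ge0; [apply: hout; left | apply: hG2; left; exact: ltW].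
have [bx|xb] := ltP bb x.
  by apply: sgnb_mul_ge0; [apply: hout; right | apply: hG2; right; exact: ltW].
have [ea|na] := eqVneq x a.
  have -> : G = 0 by apply/le_anti; rewrite hG1 ?ax ?xb // hG2 //; left; rewrite ea.
  by rewrite mulr0 sgnb0.
have [eb|nb] := eqVneq x bb.
  have -> : G = 0 by apply/le_anti; rewrite hG1 ?ax ?xb // hG2 //; right; rewrite eb.
  by rewrite mulr0 sgnb0.
apply: sgnb_mul_le0; last by apply: hG1; rewrite ax xb.
by apply: hin; rewrite !lt_neqAle ax xb andbT eq_sym na nb.
Qed.

Lemma chord_pattern {R : realType} n (b : bool) (r p a bb : R) (c lam : 'I_n -> R) :
  0 <= r -> r <= 1 -> 0 < p -> 0 < a -> a <= bb -> (forall k, 0 < lam k) ->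
  (forall k, (lam k < a \/ bb < lam k) -> sgnb b (c k)) ->
  (forall k, a < lam k < bb -> sgnb (~~ b) (c k)) ->
  exists al ga, [/\ 0 <= al, 0 <= ga, (0 < r -> 0 < ga) &
    forall k, sgnb b (c k * (al + ga * lam k `^ p - (lam k `^ p) `^ r))].
Proof.
move=> r0 r1 p0 a0 ab hl hout hin.
have A0 : 0 < a `^ p by rewrite powR_gt0.
have AB : a `^ p <= bb `^ p by rewrite powle // ?ltW.
have [al [ga [al0 ga0 gap hin' hout']]] := chord r0 r1 A0 AB.
exists al, ga; split => // k.
apply: (per_k ab (hout k) (hin k)).
- move=> /andP[h1 h2]; rewrite subr_le0.
  have l0 : 0 <= lam k by exact: ltW.
  apply: hin'; [exact: powle (ltW p0) (ltW a0) h1 | exact: powle (ltW p0) l0 h2].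
- move=> h; rewrite subr_ge0; apply: hout'; first by rewrite powR_gt0.
  have l0 : 0 <= lam k by exact: ltW.
  case: h => h; [left | right].
    exact: powle (ltW p0) l0 h.
  exact: powle (ltW p0) (le_trans (ltW a0) ab) h.
Qed.
From mathcomp Require Import zify.

Lemma thresh1 {R : realType} n (b : bool) (c lam : 'I_n -> R) (p : nat) (k0 : 'I_n) :
  (forall k l : 'I_n, (k <= l)%N -> lam l <= lam k) ->
  (forall k : 'I_n, ((k < p)%N -> sgnb b (c k)) /\ ((p <= k)%N -> sgnb (~~ b) (c k))) ->
  exists mu, (exists k, mu = lam k) /\ forall k, sgnb b (c k * (lam k - mu)).
Proof.
move=> hm hc.
case: (ltnP p n) => hp.
  exists (lam (Ordinal hp)); split; first by exists (Ordinal hp).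
  move=> k; case: (ltnP k p) => hk.
    by apply: sgnb_mul_ge0; [exact: (hc k).1 | rewrite subr_ge0; apply: hm => /=; lia].
  by apply: sgnb_mul_le0; [exact: (hc k).2 | rewrite subr_le0; apply: hm].
have hn : (n.-1 < n)%N by have := ltn_ord k0; lia.
exists (lam (Ordinal hn)); split; first by exists (Ordinal hn).
move=> k; apply: sgnb_mul_ge0.
  by apply: (hc k).1; have := ltn_ord k; lia.
by rewrite subr_ge0; apply: hm => /=; have := ltn_ord k; lia.
Qed.

Lemma thresh2 {R : realType} n (b : bool) (c lam : 'I_n -> R) (p q : nat) (k0 : 'I_n) :
  (forall k l : 'I_n, (k <= l)%N -> lam l <= lam k) -> (p <= q)%N ->
  (forall k : 'I_n, [/\ (k < p)%N -> sgnb b (c k), (p <= k < q)%N -> sgnb (~~ b) (c k)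
      & (q <= k)%N -> sgnb b (c k)]) ->
  exists a bb, [/\ (exists k, a = lam k), a <= bb,
    (forall k, (lam k < a \/ bb < lam k) -> sgnb b (c k)) &
    (forall k, a < lam k < bb -> sgnb (~~ b) (c k))].
Proof.
move=> hm pq hc.
have mono_lt : forall k l : 'I_n, lam k < lam l -> (l < k)%N.
  by move=> k l h; rewrite ltnNge; apply/negP => /hm; rewrite leNgt h.
case: (boolP ((p < n) && (p < q))%N) => [/andP[hp hpq]|hnot].
  have hq : ((minn q n).-1 < n)%N by lia.
  exists (lam (Ordinal hq)), (lam (Ordinal hp)); split.
  - by exists (Ordinal hq).
  - by apply: hm => /=; lia.
  - move=> k [h|h].
      have := mono_lt _ _ h => /= h'; have := ltn_ord k => hk.
      by case: (hc k) => _ _; apply; lia.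
    by have := mono_lt _ _ h => /= h'; case: (hc k) => + _ _; apply.
  - move=> k /andP[h1 h2].
    have := mono_lt _ _ h1 => /= h1'; have := mono_lt _ _ h2 => /= h2'.
    by case: (hc k) => _ + _; apply; lia.
exists (lam k0), (lam k0); split => //.
- by exists k0.
- move=> k _; have := ltn_ord k => hk.
  case: (ltnP k p) => h; first by case: (hc k) => + _ _; apply.
  by case: (hc k) => _ _; apply; lia.
- by move=> k /andP[h1 h2]; have := lt_trans h1 h2; rewrite ltxx.
Qed.

Lemma term_pos {R : realType} (t c x y : R) : 0 <= t -> 0 < x -> 0 < y ->
  0 <= c * (x - y) -> 0 <= c * (x `^ t - y `^ t).
Proof.
move=> t0 x0 y0 h.
have [xy|yx] := leP x y.
  have [->|xy'] := eqVneq x y; first by rewrite !subrr mulr0.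
  have hxy : x - y < 0 by rewrite subr_lt0 lt_neqAle xy' xy.
  have c0 : c <= 0 by rewrite -(nmulr_lge0 _ hxy).
  have hp : x `^ t <= y `^ t by apply: powle => //; exact: ltW.
  by apply: mulr_le0 => //; rewrite subr_le0.
have hyx : 0 < x - y by rewrite subr_gt0.
have c0 : 0 <= c by rewrite -(pmulr_lge0 _ hyx).
have hp : y `^ t <= x `^ t by apply: powle => //; exact: ltW.
by apply: mulr_ge0 => //; rewrite subr_ge0.
Qed.

Lemma term_zero {R : realType} (t c x y : R) : c * (x - y) = 0 -> c * (x `^ t - y `^ t) = 0.
Proof.
by move/eqP; rewrite mulf_eq0 => /orP[/eqP->|]; rewrite ?mul0r // subr_eq0 => /eqP->; rewrite subrr mulr0.
Qed.

Unset Implicit Arguments.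
From mathcomp Require Import zify.

Theorem lemma4p2 (R : realType) (n : nat) (A : 'M[R]_n)
  (U : 'M[R]_n) (lam : 'I_n -> R) (i j : 'I_n) :
  doubly_nonnegative A ->
  A \in unitmx ->
  U *m U^T = 1%:M ->
  (forall k, 0 < lam k) ->
  (forall k l : 'I_n, (k <= l)%N -> lam l <= lam k) ->
  A = U *m diag_mx (\row_k lam k) *m U^T ->
  ((sign_change_entry U i j = 0%N \/ sign_change_entry U i j = 1%N) ->
     is_critical_exponent U lam i j 0) /\
  (sign_change_entry U i j = 2%N ->
     exists m : R, is_critical_exponent U lam i j m /\ m <= 1).
Proof.
move=> hD _ hU hl hm hA.
have hA0 : forall i j, 0 <= A i j by case: hD.
pose c := fun k => U i k * U j k.
have fE : forall t, mx_rpow U lam t i j = \sum_k c k * lam k `^ t.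
  by move=> t; rewrite mxE.
have sum0 : \sum_k c k = (i == j)%:R.
  have := congr1 (fun M : 'M[R]_n => M i j) hU; rewrite !mxE => <-.
  by apply: eq_bigr => k _; rewrite mxE.
have powN : forall N : nat, 0 <= \sum_k c k * lam k ^+ N.
  by move=> N; have := Mpow_ge0 hA0 hU hA N i j; rewrite Mpow_entry.
have f1 : 0 <= \sum_k c k * lam k.
  by have := powN 1%N; under eq_bigr do rewrite expr1.
have crit0 : (forall t, 0 <= t -> 0 <= \sum_k c k * lam k `^ t) ->
    is_critical_exponent U lam i j 0.
  move=> h; split => //; first by move=> t t0; rewrite fE; exact: h.
have [eij|nij] := eqVneq i j.
  have hall : forall t, 0 <= \sum_k c k * lam k `^ t.
    move=> t; apply: sumr_ge0 => k _; apply: mulr_ge0; last exact: powR_ge0.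
    by rewrite /c eij -expr2 sqr_ge0.
  split=> _; first by apply: crit0 => t _; exact: hall.
  by exists 0; split; [apply: crit0 => t _; exact: hall | exact: ler01].
have sum0' : \sum_k c k = 0 by rewrite sum0 (negbTE nij).
pose s := [seq c k | k <- enum 'I_n].
have nthE : forall k : 'I_n, nth 0 s k = c k.
  by move=> k; rewrite (nth_map k) ?size_enum_ord // nth_ord_enum.
have sizeE : size s = n by rewrite size_map size_enum_ord.
have scE : sign_change_entry U i j = sign_changes s by [].
pose b0 := 0 <= head 0 [seq y <- s | y != 0].
have hb0 : sgnb b0 (head 0 [seq y <- s | y != 0]).
  rewrite /sgnb /b0; case: ifP => // /negbT; rewrite -ltNge; exact: ltW.
split.
  move=> hsc.
  have hp1 : pat b0 1 s.
    by apply: sc_pat hb0; rewrite -scE; case: hsc => ->.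
  have [p hp] := pat1_nth hp1.
  have hpk : forall k : 'I_n, ((k < p)%N -> sgnb b0 (c k)) /\ ((p <= k)%N -> sgnb (~~ b0) (c k)).
    by move=> k; rewrite -!nthE; apply: hp; rewrite sizeE.
  have [mu [[kmu emu] hmu]] := thresh1 i hm hpk.
  have dec : forall t, \sum_k c k * lam k `^ t = \sum_k c k * (lam k `^ t - mu `^ t).
    move=> t; under [RHS]eq_bigr do rewrite mulrBr.
    by rewrite sumrB -mulr_suml sum0' mul0r subr0.
  apply: crit0 => t t0; rewrite dec.
  case Eb: b0 hmu => hmu.
    apply: sumr_ge0 => k _; apply: term_pos => //; last exact: hmu.
    by rewrite emu.
  have hz : forall k, c k * (lam k - mu) = 0.
    have hs : \sum_k - (c k * (lam k - mu)) = 0.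
      apply/le_anti/andP; split.
        rewrite sumrN oppr_le0.
        have -> : \sum_k c k * (lam k - mu) = \sum_k c k * lam k.
          rewrite (eq_bigr (fun k => c k * (lam k `^ 1 - mu `^ 1))) => [|k _].
            by rewrite -dec; apply: eq_bigr => k _; rewrite powRr1 // ltW.
          by rewrite !powRr1 // ?emu ltW.
        exact: f1.
      by apply: sumr_ge0 => k _; rewrite oppr_ge0; exact: hmu.
    move=> k; apply/eqP; rewrite -oppr_eq0; apply/eqP.
    by apply: (psumr_eq0P _ hs) => // l _; rewrite oppr_ge0; exact: hmu.
  by rewrite big1 // => k _; rewrite term_zero.
move=> hsc.
have hp2 : pat b0 2 s by apply: sc_pat hb0; rewrite -scE hsc.
have [p [q [hpq hp]]] := pat2_nth hp2.
have hpk : forall k : 'I_n, [/\ (k < p)%N -> sgnb b0 (c k), (p <= k < q)%N -> sgnb (~~ b0) (c k)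
      & (q <= k)%N -> sgnb b0 (c k)].
  by move=> k; rewrite -!nthE; apply: hp; rewrite sizeE.
have [a [bb [[ka ea] ab hout hin]]] := thresh2 i hm hpq hpk.
have a0 : 0 < a by rewrite ea.
have cont : continuous (fun t => \sum_k c k * lam k `^ t).
  by apply: cont_sum => k; apply: cont_term.
have key : forall t, 1 <= t -> 0 <= \sum_k c k * lam k `^ t.
  move=> t t1; have t0 : 0 < t by apply: lt_le_trans t1.
  case Eb: b0 hout hin => hout hin.
    have r0 : 0 <= t^-1 by rewrite invr_ge0 ltW.
    have r1 : t^-1 <= 1 by rewrite invf_le1.
    have [al [ga [al0 ga0 gap hk]]] := chord_pattern r0 r1 t0 a0 ab hl hout hin.
    have gpos : 0 < ga by apply: gap; rewrite invr_gt0.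
    have hk' : forall k, c k * lam k <= al * c k + ga * (c k * lam k `^ t).
      move=> k; have := hk k; rewrite /sgnb -powRrM mulfV ?gt_eqF // (powRr1 (ltW (hl k))).
      move=> h; nra.
    have := @ler_sum _ _ (index_enum 'I_n) xpredT _ _ (fun k _ => hk' k) => /=.
    rewrite big_split /= -!mulr_sumr sum0' mulr0 add0r => h.
    by rewrite -(pmulr_rge0 _ gpos); apply: le_trans h.
  pose N := (Num.truncn t).+2.
  have tN : t < N%:R.
    apply: lt_le_trans (Num.Theory.truncnS_gt t) _; rewrite ler_nat /N; exact: leqnSn.
  have N1 : (1 : R) < N%:R by rewrite ltr1n /N.
  pose M : R := N%:R - 1.
  have M0 : 0 < M by rewrite /M subr_gt0.
  have r0 : 0 <= (t - 1) / M by rewrite divr_ge0 ?subr_ge0 // ltW.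
  have r1 : (t - 1) / M <= 1 by rewrite ler_pdivrMr // mul1r /M lerB // ltW.
  have [al [ga [al0 ga0 _ hk]]] := chord_pattern r0 r1 M0 a0 ab hl hout hin.
  have hk' : forall k, al * (c k * lam k) + ga * (c k * lam k ^+ N) <= c k * lam k `^ t.
    move=> k; have := hk k; rewrite /sgnb /= -(pmulr_rle0 _ (hl k)).
    have e1 : lam k * lam k `^ M = lam k ^+ N.
      by rewrite /M mulr_powRB1 ?(ltW (hl k)) ?(lt_trans ltr01 N1) // (powR_mulrn _ (ltW (hl k))).
    have e2 : lam k * (lam k `^ M) `^ ((t - 1) / M) = lam k `^ t.
      rewrite -powRrM mulrCA divff ?gt_eqF // mulr1.
      by rewrite (mulr_powRB1 (ltW (hl k)) t0).
    have e : lam k * (c k * (al + ga * lam k `^ M - (lam k `^ M) `^ ((t - 1) / M))) =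
      al * (c k * lam k) + ga * (c k * (lam k * lam k `^ M)) - c k * (lam k * (lam k `^ M) `^ ((t - 1) / M))
      by ring.
    by rewrite e e1 e2 subr_le0.
  have := @ler_sum _ _ (index_enum 'I_n) xpredT _ _ (fun k _ => hk' k) => /=.
  rewrite big_split /= -!mulr_sumr => h; apply: le_trans h.
  by rewrite addr_ge0 // mulr_ge0.
have [m [[m0 hm1 hm2] m1]] := crit_exists cont key.
exists m; split => //; split => //.
- by move=> t mt; rewrite fE; exact: hm1.
- move=> m' m'0 hm'; apply: hm2 => // t mt; rewrite -fE; exact: hm'.
Qed.
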